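(* Let $n\ge1$ and consider the $n\times3$ grid graph (vertices at the intersections of $n$ rows and $3$ columns, adjacent iff they are consecutive in the same row or the same column), with vertices ordered row-wise starting from the top row: the vertex in row $a$ and column $b$ receives label $3(a-1)+b$. Then this ordered grid is Generalized Bartlett, i.e., the row-wise ordering is a Generalized Bartlett ordering of the grid.
   Context: For a graph $(V,E)$ with $|V|=p$ and ordering $\sigma:V\to\{1,\dots,p\}$, set $E^\sigma_0=E$, $E^\sigma_i=E^\sigma_{i-1}\cup\{\{u,v\}:u\ne v,\sigma(u)>i,\sigma(v)>i,\{u,\sigma^{-1}(i)\},\{v,\sigma^{-1}(i)\}\in E^\sigma_{i-1}\}$ for $i=1,\dots,p-2$, and $D^\sigma(E)=E^\sigma_{p-2}$. $\sigma$ is a Generalized Bartlett ordering if there are no $u,v,w$ with $\{u,v\},\{v,w\},\{u,w\}\notin E$ but all three in $D^\sigma(E)$; the graph is Generalized Bartlett if such an ordering exists. *)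

(* Defs.v *)
From mathcomp Require Import all_boot.
Set Implicit Arguments. Unset Strict Implicit. Unset Printing Implicit Defensive.

Definition simple_graph (V : finType) (E : rel V) :=
  symmetric E /\ irreflexive E.

Definition is_ordering (V : finType) (sigma : V -> nat) :=
  injective sigma /\ forall v, 1 <= sigma v <= #|V|.

Fixpoint fill (V : finType) (E : rel V) (sigma : V -> nat) (i : nat) : rel V :=
  match i with
  | 0 => E
  | i'.+1 =>
      let Ep := fill E sigma i' in
      fun u v => Ep u v ||
        [&& u != v, i'.+1 < sigma u, i'.+1 < sigma v &
            [exists w, [&& sigma w == i'.+1, Ep u w & Ep v w]]]
  end.

Definition Dfill (V : finType) (E : rel V) (sigma : V -> nat) : rel V :=
  fill E sigma (#|V| - 2).

Definition GB_ordering (V : finType) (E : rel V) (sigma : V -> nat) : Prop :=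
  is_ordering sigma /\
  ~ (exists u v w : V,
       [/\ ~~ E u v, ~~ E v w, ~~ E u w &
           [/\ Dfill E sigma u v, Dfill E sigma v w & Dfill E sigma u w]]).

(* The n x 3 grid, 0-indexed: vertex (a, b), a : 'I_n row, b : 'I_3 column. *)
Definition grid_adj (n : nat) : rel ('I_n * 'I_3) :=
  fun x y =>
    ((x.1 == y.1) && ((x.2.+1 == y.2 :> nat) || (y.2.+1 == x.2 :> nat))) ||
    ((x.2 == y.2) && ((x.1.+1 == y.1 :> nat) || (y.1.+1 == x.1 :> nat))).

(* Row-wise label: row a+1, column b+1 gets 3a + (b+1). *)
Definition grid_rowwise (n : nat) : 'I_n * 'I_3 -> nat :=
  fun x => 3 * x.1 + x.2 + 1.

(* Main.v *)
Require Import Defs.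
From mathcomp Require Import all_boot.
From mathcomp Require Import zify.

Lemma gr_inj n : injective (@grid_rowwise n).
Proof.
move=> [a b] [c d]; rewrite /grid_rowwise /= => h.
have hb := ltn_ord b; have hd := ltn_ord d.
have e1 : (a : nat) = c by lia.
have e2 : (b : nat) = d by lia.
by congr pair; apply: val_inj.
Qed.

Lemma gadjE n (x y : 'I_n * 'I_3) : grid_adj x y =
  (((x.1 : nat) == y.1) && ((x.2.+1 == y.2 :> nat) || (y.2.+1 == x.2 :> nat))) ||
    (((x.2 : nat) == y.2) && ((x.1.+1 == y.1 :> nat) || (y.1.+1 == x.1 :> nat))).
Proof. by []. Qed.

Lemma fill_inv n i (u v : 'I_n * 'I_3) :
  fill (@grid_adj n) (@grid_rowwise n) i u v ->
  grid_rowwise u != grid_rowwise v /\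
  grid_rowwise u <= grid_rowwise v + 3 /\ grid_rowwise v <= grid_rowwise u + 3.
Proof.
elim: i u v => [|i IH] u v /=.
  case: u v => [a b] [c d]; rewrite !gadjE /grid_rowwise /=.
  have hb := ltn_ord b; have hd := ltn_ord d.
  move=> h; lia.
case/orP; first exact: IH.
case/and4P => huv hu hv /existsP [w /and3P [/eqP hw /IH [_ [h1 h2]] /IH [_ [h3 h4]]]].
split; last lia.
apply/negP => /eqP /gr_inj /eqP; by rewrite (negbTE huv).
Qed.

Theorem lemma10 (n : nat) (hn : 1 <= n) :
  GB_ordering (@grid_adj n) (@grid_rowwise n).
Proof.
split.
  split; first exact: (@gr_inj n).
  move=> [a b]; rewrite card_prod !card_ord /grid_rowwise /=.
  have ha := ltn_ord a; have hb := ltn_ord b; lia.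
move=> [u [v [w [nuv nvw nuw [/fill_inv h1 /fill_inv h2 /fill_inv h3]]]]].
move: nuv nvw nuw h1 h2 h3.
case: u v w => [a1 b1] [a2 b2] [a3 b3]; rewrite !gadjE /grid_rowwise /=.
case: b1 => [[|[|[|?]]] ?] //=; case: b2 => [[|[|[|?]]] ?] //=;
case: b3 => [[|[|[|?]]] ?] //= *; lia.
Qed.
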